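(* Let $A\in\mathbb{R}^{r\times n}$ ($r\le n$) have full row rank with singular values $\sigma_1=\sigma_2=\dots=\sigma_r$, let $F\in\mathbb{R}^{K\times n}$ with $FA^T\ne0$, and let $\lambda'>0$. Let $D^*=FA^T(AA^T)^{-1}$, $\tilde D^*=FA^T(AA^T+\lambda'I)^{-1}$, and for $M\in\mathbb{R}^{K\times r}$ let $\gamma(M)=\|M\|_F^2\|A\|_F^2/\|MA\|_F^2$. Then $\gamma(\tilde D^* )=\gamma(D^* )=r$.
   Context: $D^*$ and $\tilde D^*$ are the solutions of the unregularized and $\ell_2$-regularized linear regression problems $\min_D\|F-DA\|_F^2$ and $\min_D\|F-DA\|_F^2+\lambda'\|D\|_F^2$; $\gamma$ is the (relative) spectral risk. *)

(* Defs.v *)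
From mathcomp Require Import all_boot all_order all_algebra.
From mathcomp Require Import reals.
Set Implicit Arguments. Unset Strict Implicit. Unset Printing Implicit Defensive.
Import Order.TTheory GRing.Theory Num.Theory.
Local Open Scope ring_scope.

Definition frob2 {R : realType} {m p : nat} (M : 'M[R]_(m, p)) : R :=
  \sum_(i < m) \sum_(j < p) M i j ^+ 2.

Definition is_singular_values {R : realType} {r n : nat}
  (A : 'M[R]_(r, n)) (sigma : 'rV[R]_r) : Prop :=
  (forall i, 0 <= sigma 0 i) /\
  (forall i j : 'I_r, (i <= j)%N -> sigma 0 j <= sigma 0 i) /\
  exists (U : 'M[R]_r) (V : 'M[R]_(n, r)),
    U^T *m U = 1%:M /\ U *m U^T = 1%:M /\ V^T *m V = 1%:M /\
    A = U *m diag_mx sigma *m V^T.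

Definition gamma {R : realType} {K r n : nat}
  (A : 'M[R]_(r, n)) (M : 'M[R]_(K, r)) : R :=
  frob2 M * frob2 A / frob2 (M *m A).

(* Main.v *)
Require Import Defs.
From mathcomp Require Import all_boot all_order all_algebra.
From mathcomp Require Import reals.
From mathcomp Require Import ring lra.
Import Order.TTheory GRing.Theory Num.Theory.
Local Open Scope ring_scope.

Lemma frob2_tr (R : realType) m p (M : 'M[R]_(m, p)) :
  frob2 M = \tr (M *m M^T).
Proof.
rewrite /frob2 /mxtrace; apply: eq_bigr => i _.
rewrite mxE; apply: eq_bigr => j _; by rewrite mxE expr2.
Qed.

Lemma frob2Z (R : realType) m p (t : R) (M : 'M[R]_(m, p)) :
  frob2 (t *: M) = t ^+ 2 * frob2 M.
Proof.
rewrite /frob2 mulr_sumr; apply: eq_bigr => i _.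
rewrite mulr_sumr; apply: eq_bigr => j _; by rewrite mxE exprMn.
Qed.

Lemma frob2_gt0 (R : realType) m p (M : 'M[R]_(m, p)) :
  M != 0 -> 0 < frob2 M.
Proof.
move=> nz; rewrite lt0r; apply/andP; split; last first.
  by apply: sumr_ge0 => i _; apply: sumr_ge0 => j _; exact: sqr_ge0.
apply: contra nz => /eqP H; apply/eqP/matrixP => i j; rewrite mxE.
have H1 := (psumr_eq0P (fun i _ => sumr_ge0 _ (fun j _ => sqr_ge0 (M i j))) H (i:=i) isT).
have H2 := (psumr_eq0P (fun j _ => sqr_ge0 (M i j)) H1 (i:=j) isT).
by apply/eqP; rewrite -sqrf_eq0 H2.
Qed.

Lemma frob2_mulA (R : realType) K r n (A : 'M[R]_(r, n)) (M : 'M[R]_(K, r)) d :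
  A *m A^T = d%:M -> frob2 (M *m A) = d * frob2 M.
Proof.
move=> H; rewrite !frob2_tr trmx_mul mulmxA -(mulmxA M) H.
by rewrite mul_mx_scalar -scalemxAl linearZ.
Qed.

Lemma gammaZ (R : realType) K r n (A : 'M[R]_(r, n)) (M : 'M[R]_(K, r)) t :
  t != 0 -> gamma A (t *: M) = gamma A M.
Proof.
move=> t0; rewrite /gamma -scalemxAl !frob2Z.
have t2 : t ^+ 2 != 0 by rewrite expf_neq0.
rewrite invfM -!mulrA; set a := frob2 M; set b := frob2 A.
by rewrite [b * _]mulrCA [a * _]mulrCA !mulrA -expr2 mulfV // mul1r.
Qed.

Theorem corollary4 (R : realType) (K r n : nat)
  (A : 'M[R]_(r, n)) (F : 'M[R]_(K, n)) (lam : R) :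
  (r <= n)%N ->
  \rank A = r ->
  (exists sigma : 'rV[R]_r, is_singular_values A sigma /\
     forall i j : 'I_r, sigma 0 i = sigma 0 j) ->
  F *m A^T != 0 ->
  0 < lam ->
  let Dstar := F *m A^T *m invmx (A *m A^T) in
  let Dtilde := F *m A^T *m invmx (A *m A^T + lam%:M) in
  gamma A Dtilde = r%:R /\ gamma A Dstar = r%:R.
Proof.
move=> _ _ [s [[s0 [_ [U [V [_ [UU [VV defA]]]]]]] seq]] FA lam0.
case: r A F U V s s0 seq defA UU VV FA => [|r'] A F U V s s0 seq defA UU VV FA /=.
  by move: FA; rewrite thinmx0 eqxx.
set c := s 0 ord0.
have dS : diag_mx s = c%:M.
  apply/matrixP => i j; rewrite !mxE; case: eqP => //; by rewrite (seq i ord0).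
have AA : A *m A^T = (c ^+ 2)%:M.
  rewrite defA dS mul_mx_scalar -scalemxAl linearZ /= trmx_mul trmxK.
  rewrite -scalemxAr -scalemxAl scalerA -expr2 -!mulmxA (mulmxA V^T) VV mul1mx.
  by rewrite UU scale_scalar_mx mulr1.
have c0 : c != 0.
  apply: contra FA => /eqP c0.
  by rewrite defA dS c0 mul_mx_scalar scale0r mul0mx trmx0 mulmx0.
set B := F *m A^T.
have gB : gamma A B = r'.+1%:R.
  rewrite /gamma (@frob2_mulA _ _ _ _ _ B _ AA) (@frob2_tr _ _ _ A) AA mxtrace_scalar.
  have fB := @frob2_gt0 _ _ _ B FA.
  by field; rewrite c0 gt_eqF.
split.
  have E : (c ^+ 2)%:M + lam%:M = (c ^+ 2 + lam)%:M :> 'M[R]_r'.+1 by rewrite raddfD.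
  rewrite AA E invmx_scalar mul_mx_scalar gammaZ // -/B.
  rewrite invr_neq0 // gt_eqF // ltr_wpDl // sqr_ge0.
  by []. rewrite AA invmx_scalar mul_mx_scalar gammaZ // -/B.
by rewrite invr_neq0 // expf_neq0.
Qed.
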